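(* In the setting described in the context, assume A1, A2 and A3. If there exists $k^\star\in\{1,\dots,K\}$ with $\inf_{\mathbf w\in\mathcal W^*}w_{k^\star}>\frac12$, then $\liminf_{n\to\infty}\Pr\big(Y\in\mathcal C_{\mathrm{comb}}(\mathbf X;\mathcal D_n)\big)\ge1-\alpha$.
   Context: Setting: fix $K\ge2$ and $\alpha\in(0,1)$. For each sample size $n$, on a common probability space there are a random data set $\mathcal D_n$ and a random test pair $(\mathbf X,Y)$ with $\mathbf X\in\mathcal X\subseteq\mathbb R^p$, $Y\in\mathbb R$. For each $k\in\{1,\dots,K\}$ there is a random prediction set $\mathcal C_k(\mathbf X;\mathcal D_n)\subseteq\mathbb R$, determined by $\mathcal D_n$ and $\mathbf X$, such that the events $\{Y\in\mathcal C_k(\mathbf X;\mathcal D_n)\}$ are measurable. Let $\Delta^{K-1}=\{\mathbf w\in[0,1]^K:w_k\ge0,\sum_k w_k=1\}$ and let $\widehat{\mathbf w}_n=(\widehat w_{n,1},\dots,\widehat w_{n,K})$ be a $\sigma(\mathcal D_n)$-measurable random vector in $\Delta^{K-1}$. Let $\mathcal W^*\subseteq\Delta^{K-1}$ be a nonempty closed convex set; $\|\cdot\|$ is the Euclidean norm. A1: for every $n$ and every $k$, $\Pr(Y\notin\mathcal C_k(\mathbf X;\mathcal D_n)\mid\mathcal D_n)\le\alpha$ almost surely. A2: $\inf_{\mathbf w\in\mathcal W^*}\|\widehat{\mathbf w}_n-\mathbf w\|\to0$ in probability as $n\to\infty$. A3: $\mathcal C_{\mathrm{comb}}(\mathbf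 X;\mathcal D_n):=\{y\in\mathbb R:\sum_{k=1}^K\widehat w_{n,k}\mathbf 1\{y\in\mathcal C_k(\mathbf X;\mathcal D_n)\}>1/2\}$. *)

(* Defs.v *)
From HB Require Import structures.
From mathcomp Require Import all_boot all_order all_algebra.
From mathcomp Require Import all_classical all_reals all_analysis.
Set Implicit Arguments. Unset Strict Implicit. Unset Printing Implicit Defensive.
Import Order.TTheory GRing.Theory Num.Theory.
Local Open Scope classical_set_scope.
Local Open Scope ring_scope.

Definition sigma_of {d d' : measure_display} {Omega : measurableType d}
  {T : measurableType d'} (f : Omega -> T) : set (set Omega) :=
  [set f @^-1` A | A in [set A : set T | measurable A]].

Definition G_measurable {d : measure_display} {Omega : measurableType d}
  {R : realType} (G : set (set Omega)) (g : Omega -> R) : Prop :=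
  forall B : set R, measurable B -> G (g @^-1` B).

(* "Pr(A | G) <= a almost surely": some version g of the conditional
   probability of A given the sigma-algebra G (i.e. g is G-measurable and
   P(A ∩ B) = ∫_B g dP for every B in G) satisfies g <= a P-a.s. *)
Definition cond_prob_le {d : measure_display} {Omega : measurableType d}
  {R : realType} (P : probability Omega R) (G : set (set Omega))
  (A : set Omega) (a : R) : Prop :=
  exists g : Omega -> R,
    [/\ G_measurable G g,
        (forall B, G B -> P (A `&` B) = (\int[P]_(x in B) (g x)%:E)%E)
      & {ae P, forall x, g x <= a}].

Definition eucl_norm {R : realType} {K : nat} (v : 'rV[R]_K) : R :=
  Num.sqrt (\sum_(i < K) (v 0 i) ^+ 2).

Definition dist_set {R : realType} {K : nat} (w : 'rV[R]_K) (W : set 'rV[R]_K) : R :=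
  inf [set eucl_norm (w - v) | v in W].

Definition simplex (R : realType) (K : nat) : set 'rV[R]_K :=
  [set w | (forall k, 0 <= w 0 k) /\ \sum_(k < K) w 0 k = 1].

Definition convex_set_rV {R : realType} {K : nat} (W : set 'rV[R]_K) : Prop :=
  forall u v (t : R), W u -> W v -> 0 <= t -> t <= 1 ->
    W (t *: u + (1 - t) *: v).

Definition comb_set {R : realType} {K : nat} (w : 'rV[R]_K)
  (C : 'I_K -> set R) : set R :=
  [set y | 2^-1 < \sum_(k < K) w 0 k * \1_(C k) y].
Arguments simplex R K : clear implicits.

(* Main.v *)
Require Import Defs.
From HB Require Import structures.
From mathcomp Require Import all_boot all_order all_algebra.
From mathcomp Require Import all_classical all_reals all_analysis.
From mathcomp Require Import ring lra.
Import Order.TTheory GRing.Theory Num.Theory numFieldNormedType.Exports.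
Local Open Scope classical_set_scope.
Local Open Scope ring_scope.
Set Implicit Arguments. Unset Strict Implicit.

Lemma liminf_ge (R : realType) (c : R) (u v : (\bar R)^nat) :
  (forall n, (c%:E - v n <= u n)%E) -> v @ \oo --> 0%E -> (c%:E <= limn_einf u)%E.
Proof.
move=> H cv0.
have mono : (limn_einf (fun n => c%:E - v n) <= limn_einf u)%E.
  rewrite !limn_einf_lim; apply: lee_lim; [exact: is_cvg_einfs|exact: is_cvg_einfs|].
  apply: nearW => n; rewrite /einfs /=.
  apply: le_ereal_inf_tmp => _ [m /= nm <-].
  apply: le_trans (H m).
  by apply: ereal_inf_lbound; exists m.
have cv : (fun n => c%:E - v n)%E @ \oo --> c%:E.
  rewrite -[X in _ --> X]sube0; apply: cvgeB => //; exact: cvg_cst.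
by rewrite -(cvg_limn_einf_sup cv).1.
Qed.

Lemma sigma_meas (d : measure_display) (Omega : measurableType d)
  (dD : measure_display) (TD : measurableType dD) (D : Omega -> TD) (B : set Omega) :
  measurable_fun setT D -> sigma_of D B -> measurable B.
Proof.
move=> mD [A mA <-]; rewrite -[X in measurable X]setTI; exact: mD.
Qed.

Lemma Gmeas_meas (d : measure_display) (Omega : measurableType d) (R : realType)
  (dD : measure_display) (TD : measurableType dD) (D : Omega -> TD) (g : Omega -> R) :
  measurable_fun setT D -> G_measurable (sigma_of D) g -> measurable_fun setT g.
Proof.
move=> mD gm _ B mB; rewrite setTI; have := gm B mB; exact: sigma_meas.
Qed.

Lemma cond_le_bound (d : measure_display) (Omega : measurableType d) (R : realType)
  (P : probability Omega R) (dD : measure_display) (TD : measurableType dD)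
  (D : Omega -> TD) (A : set Omega) (a : R) :
  measurable_fun setT D -> 0 <= a -> cond_prob_le P (sigma_of D) A a ->
  (P A <= a%:E)%E.
Proof.
move=> mD a0 [g [gm Hg gae]].
have mg := Gmeas_meas mD gm.
have GT : sigma_of D setT by exists setT; [exact: measurableT|exact: preimage_setT].
have := Hg setT GT; rewrite setIT => ->.
rewrite integralE.
apply: (le_trans (leeB (lexx _) (_ : 0 <= _)%E)); first exact: integral_ge0.
rewrite sube0.
apply: (@le_trans _ _ (\int[P]_(x in setT) cst a%:E x)%E); last first.
  rewrite integral_cst //.
  rewrite [X in (_ * X)%E](_ : _ = 1%E); last exact: probability_setT.
  by rewrite mule1.
apply: ae_ge0_le_integral => //.
- by apply: measurable_realfun.measurable_funepos; apply/measurable_realfun.measurable_EFinP.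
- apply: filterS gae => x gx _.
  rewrite funeposE /= ge_max; apply/andP; split; rewrite lee_fin //.
Qed.

Lemma norm_ge0 (R : realType) K (v : 'rV[R]_K) : 0 <= eucl_norm v.
Proof. exact: sqrtr_ge0. Qed.

Lemma coord_le_norm (R : realType) K (v : 'rV[R]_K) k : `|v 0 k| <= eucl_norm v.
Proof.
rewrite /eucl_norm -sqrtr_sqr; apply: ler_wsqrtr.
rewrite (bigD1 k) //= lerDl; apply: sumr_ge0 => i _; exact: sqr_ge0.
Qed.

Lemma dist_le (R : realType) K (W : set 'rV[R]_K) x v :
  W v -> dist_set x W <= eucl_norm (x - v).
Proof.
move=> Wv; apply: ge_inf; last by exists v.
by exists 0 => _ [u _ <-]; exact: norm_ge0.
Qed.

Lemma dist_lt (R : realType) K (W : set 'rV[R]_K) x eps :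
  W !=set0 -> dist_set x W < eps -> exists2 v, W v & eucl_norm (x - v) < eps.
Proof.
move=> [v0 Wv0] H.
have [y [v Wv <-] yl] := inf_lt (ex_intro _ (eucl_norm (x - v0)) (ex_intro2 _ _ v0 Wv0 erefl)) H.
by exists v.
Qed.

Lemma norm_lt_sum (R : realType) K (x v : 'rV[R]_K) eps : 0 < eps ->
  (eucl_norm (x - v) < eps) = (\sum_(k < K) (x 0 k - v 0 k) ^+ 2 < eps ^+ 2).
Proof.
move=> e0; rewrite /eucl_norm -{1}(gtr0_norm e0) -sqrtr_sqr ltr_sqrt ?exprn_gt0 //.
by congr (_ < _); apply: eq_bigr => k _; rewrite !mxE.
Qed.

Lemma box_lemma (R : realType) K (x v : 'rV[R]_K) eps : 0 < eps ->
  \sum_(k < K) (x 0 k - v 0 k) ^+ 2 < eps ^+ 2 ->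
  exists2 dl, 0 < dl & forall y : 'rV[R]_K, (forall k, `|y 0 k - x 0 k| < dl) ->
     \sum_(k < K) (y 0 k - v 0 k) ^+ 2 < eps ^+ 2.
Proof.
move=> e0 hs.
set s := \sum_(k < K) _ in hs.
set c := 2 * eps + 1.
have c0 : 0 < c by rewrite /c; lra.
set gap := eps ^+ 2 - s.
have g0 : 0 < gap by rewrite /gap; lra.
have K0 : 0 < (K%:R + 1) * c :> R by apply: mulr_gt0 => //; rewrite ltr_wpDl.
set dl := Num.min 1 (gap / ((K%:R + 1) * c)).
have dl0 : 0 < dl by rewrite /dl lt_min ltr01 divr_gt0.
have dl1 : dl <= 1 by rewrite /dl ge_min lexx.
have dlg : dl * ((K%:R + 1) * c) <= gap.
  by rewrite -ler_pdivlMr // /dl ge_min lexx orbT.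
exists dl => // y hy.
have term : forall k, (y 0 k - v 0 k) ^+ 2 <= (x 0 k - v 0 k) ^+ 2 + dl * c.
  move=> k.
  have ha : (x 0 k - v 0 k) ^+ 2 <= s.
    rewrite /s (bigD1 k) //= lerDl; apply: sumr_ge0 => i _; exact: sqr_ge0.
  have := hy k; rewrite ltr_norml => /andP[t1 t2].
  set a := x 0 k - v 0 k in ha *.
  set t := y 0 k - x 0 k in t1 t2.
  have -> : y 0 k - v 0 k = a + t by rewrite /a /t; ring.
  have a1 : a < eps by nra.
  have a2 : - eps < a by nra.
  rewrite /c; nra.
apply: (le_lt_trans (ler_sum _ (fun k _ => term k))).
rewrite big_split /= -/s sumr_const card_ord.
have : dl * c * K%:R + dl * c <= gap.
  by rewrite (_ : dl * c * K%:R + dl * c = dl * ((K%:R + 1) * c)) //; ring.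
rewrite /gap -mulr_natr.
have : 0 < dl * c by apply: mulr_gt0.
lra.
Qed.

Lemma meas_dist_lt (d : measure_display) (Omega : measurableType d) (R : realType) K
  (f : Omega -> 'rV[R]_K) (W : set 'rV[R]_K) (eps : R) :
  0 < eps -> W !=set0 -> (forall k, measurable_fun setT (fun w => f w 0 k)) ->
  measurable [set w | dist_set (f w) W < eps].
Proof.
move=> e0 W0 mf.
pose box (b : {ffun 'I_K -> rat * rat}) (y : 'rV[R]_K) :=
  forall k, ratr (b k).1 < y 0 k < ratr (b k).2.
pose F (n : nat) : set Omega := match unpickle n with
  | Some b => if pselect (forall y, box b y -> dist_set y W < eps)
              then [set w | box b (f w)] else set0
  | None => set0 end.
have mF : forall n, measurable (F n).
  move=> n; rewrite /F; case: (unpickle n) => [b|]; last exact: measurable0.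
  case: pselect => Hb; last exact: measurable0.
  have -> : [set w | box b (f w)] = \bigcap_(k in [set: 'I_K])
      ((fun w => f w 0 k) @^-1` `]ratr (b k).1, ratr (b k).2[).
    apply/seteqP; split => w /=.
    - by move=> H k _ /=; rewrite in_itv /=; exact: H.
    - by move=> H k; have := H k I; rewrite /= in_itv /=.
  apply: fin_bigcap_measurable; first exact: finite_finset.
  move=> k _; rewrite -[X in measurable X]setTI; apply: mf => //.
have -> : [set w | dist_set (f w) W < eps] = \bigcup_(n in setT) F n.
  apply/seteqP; split => w /=; last first.
    move=> [n _]; rewrite /F; case: (unpickle n) => [b|] //.
    by case: pselect => // Hb; exact: Hb.
  move=> H.
  have [v Wv nv] := dist_lt W0 H.
  rewrite norm_lt_sum // in nv.
  have [dl dl0 Hdl] := box_lemma e0 nv.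
  have hq : forall k : 'I_K, exists q : rat * rat,
      (f w 0 k - dl < ratr q.1 < f w 0 k) /\ (f w 0 k < ratr q.2 < f w 0 k + dl).
    move=> k.
    have [q1 hq1] : exists q : rat, ratr q \in `](f w 0 k - dl), (f w 0 k)[.
      by apply: rat_in_itvoo; lra.
    have [q2 hq2] : exists q : rat, ratr q \in `](f w 0 k), (f w 0 k + dl)[.
      by apply: rat_in_itvoo; lra.
    by move: hq1 hq2; rewrite !in_itv /= => ? ?; exists (q1, q2).
  have [g hg] := choice hq.
  pose b := [ffun k => g k].
  have Hbox : forall y, box b y -> dist_set y W < eps.
    move=> y hy; apply: le_lt_trans (dist_le _ Wv) _; rewrite norm_lt_sum //.
    apply: Hdl => k; have := hy k; rewrite ffunE; have [/andP[h1 h2] /andP[h3 h4]] := hg k.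
    move=> /andP[h5 h6]; rewrite ltr_norml; apply/andP; split; lra.
  exists (pickle b) => //; rewrite /F pickleK.
  case: pselect => // _ k; rewrite ffunE.
  by have [/andP[h1 h2] /andP[h3 h4]] := hg k; rewrite h2 h3.
by apply: bigcup_measurable => n _; exact: mF.
Qed.

Theorem theorem2
  (R : realType) (K p : nat) (alpha : R)
  (d : measure_display) (Omega : measurableType d) (P : probability Omega R)
  (dD : measure_display) (TD : nat -> measurableType dD)
  (D : forall n, Omega -> TD n)
  (X : nat -> Omega -> 'rV[R]_p) (Y : nat -> Omega -> R)
  (C : forall n, 'I_K -> TD n -> 'rV[R]_p -> set R)
  (what : nat -> Omega -> 'rV[R]_K)
  (Wstar : set 'rV[R]_K) :
  (2 <= K)%N -> 0 < alpha < 1 ->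
  (forall n, measurable_fun setT (D n)) ->
  (forall n, measurable_fun setT (Y n)) ->
  (forall n k, measurable [set w | C n k (D n w) (X n w) (Y n w)]) ->
  (forall n w, simplex R K (what n w)) ->
  (forall n k, G_measurable (sigma_of (D n)) (fun w => what n w 0 k)) ->
  Wstar !=set0 -> closed Wstar -> convex_set_rV Wstar -> Wstar `<=` simplex R K ->
  (* A1 *)
  (forall n k, cond_prob_le P (sigma_of (D n))
                 [set w | ~ C n k (D n w) (X n w) (Y n w)] alpha) ->
  (* A2 *)
  (forall eps : R, 0 < eps ->
     (fun n => P [set w | eps <= dist_set (what n w) Wstar]) @ \oo --> 0%E) ->
  (exists kstar : 'I_K, 2^-1 < inf [set v 0 kstar | v in Wstar]) ->
  ((1 - alpha)%:E <=
     limn_einf (fun n => P [set w |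
        comb_set (what n w) (fun k => C n k (D n w) (X n w)) (Y n w)]))%E.
Proof.
move=> K2 /andP[a0 a1] mD mY mC simp whatm W0 Wc Wconv Wsub A1 A2 [ks hks].
set m := inf [set v 0 ks | v in Wstar] in hks.
set eps := m - 2^-1.
have e0 : 0 < eps by rewrite /eps; lra.
have mwhat : forall n k, measurable_fun setT (fun w => what n w 0 k).
  by move=> n k; apply: (Gmeas_meas (mD n)); exact: whatm.
have lbm : forall v, Wstar v -> m <= v 0 ks.
  move=> v Wv; apply: ge_inf; last by exists v.
  by exists 0 => _ [u Wu <-]; exact: ((Wsub u Wu).1 ks).
have TS : forall x : 'rV[R]_K, x 0 ks <= 2^-1 -> eps <= dist_set x Wstar.
  move=> x hx; rewrite leNgt; apply/negP => /(dist_lt W0) [v Wv nv].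
  have := coord_le_norm (x - v) ks; rewrite !mxE => hc.
  have := lbm v Wv; move: hc; rewrite ler_norml => /andP[h1 h2] h3.
  rewrite /eps in nv; lra.
apply: (@liminf_ge _ (1 - alpha) _ (fun n => P [set w | eps <= dist_set (what n w) Wstar])); last first.
  exact: A2.
move=> n.
set Cn := [set w | C n ks (D n w) (X n w) (Y n w)].
set Tn := [set w | what n w 0 ks <= 2^-1].
set Sn := [set w | eps <= dist_set (what n w) Wstar].
set Mn := [set w | comb_set (what n w) (fun k => C n k (D n w) (X n w)) (Y n w)].
have mCn : measurable Cn by exact: mC.
have mTn : measurable Tn.
  have -> : Tn = (fun w => what n w 0 ks) @^-1` `]-oo, 2^-1].
    by apply/seteqP; split => w /=; rewrite in_itv /=.
  rewrite -[X in measurable X]setTI; exact: mwhat.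
have mSn : measurable Sn.
  have -> : Sn = ~` [set w | dist_set (what n w) Wstar < eps].
    apply/seteqP; split => w /=.
    - by move=> H; apply/negP; rewrite -leNgt.
    - by move=> H; rewrite /Sn /= leNgt; apply/negP.
  by apply: measurableC; apply: meas_dist_lt.
have mMn : measurable Mn.
  have -> : Mn = (fun w => \sum_(k < K) what n w 0 k *
       \1_[set w | C n k (D n w) (X n w) (Y n w)] w) @^-1` `]2^-1, +oo[.
    by apply/seteqP; split => w /=; rewrite in_itv /= andbT.
  rewrite -[X in measurable X]setTI.
  have mh : measurable_fun setT (fun w => \sum_(k < K) what n w 0 k *
       \1_[set w | C n k (D n w) (X n w) (Y n w)] w).
    apply: measurable_sum => k; apply: measurable_realfun.measurable_funM.
      exact: mwhat.
    exact: measurable_realfun.measurable_indic.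
  by apply: mh => //; exact: measurable_itv.
set E := Cn `&` ~` Tn.
have mE : measurable E by apply: measurableI => //; exact: measurableC.
have EM : E `<=` Mn.
  move=> w [hc /= ht]; rewrite /Mn /comb_set /=.
  have ht' : 2^-1 < what n w 0 ks by rewrite ltNge; apply/negP.
  rewrite (bigD1 ks) //= indicE (mem_set (hc : C n ks (D n w) (X n w) (Y n w))) mulr1.
  apply: (lt_le_trans ht'); rewrite lerDl; apply: sumr_ge0 => i _.
  by apply: mulr_ge0; [exact: ((simp n w).1 i)| rewrite indicE].
have TSn : Tn `<=` Sn by move=> w; exact: TS.
have hA : (P (~` Cn) <= alpha%:E)%E.
  apply: (cond_le_bound (mD n)); first exact: ltW.
  exact: A1.
have hE : (P (~` E) <= alpha%:E + P Sn)%E.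
  rewrite setCI setCK; apply: le_trans (measureU2 _ _ _) _.
  - exact: measurableC.
  - exact: mTn.
  apply: leeD => //; apply: le_measure => //; rewrite inE //.
apply: (@le_trans _ _ (P E)); last by apply: le_measure => //; rewrite inE.
have -> : P E = (1 - P (~` E))%E.
  by rewrite -probability_setC ?setCK //; exact: measurableC.
rewrite EFinB -addeA -oppeD //.
apply: leeB => //.
Qed.
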